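(* For each $\varepsilon\in(0,1]$ let $f_\varepsilon\in L^1(\mathbb{R}^d)$, and let $f\in L^1(\mathbb{R}^d)$. Assume all $f_\varepsilon$ and $f$ are nonnegative, continuous, radial and radially nonincreasing, and that $f_\varepsilon\to f$ weakly as $\varepsilon\to0$ (as measures on $\mathbb{R}^d$). Then $f_\varepsilon(x)\to f(x)$ as $\varepsilon\to0$ for every $x\ne0$. *)

(* Defs.v *)
From HB Require Import structures.
From mathcomp Require Import all_boot all_order all_algebra.
From mathcomp Require Import all_classical all_reals all_analysis.
Set Implicit Arguments. Unset Strict Implicit. Unset Printing Implicit Defensive.
Import Order.TTheory GRing.Theory Num.Theory.
Import numFieldNormedType.Exports.
Local Open Scope classical_set_scope.
Local Open Scope ring_scope.

(* Euclidean norm on R^d (the library norm on matrices is the sup norm). *)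
Definition enorm (R : realType) (d : nat) (x : 'rV[R]_d) : R :=
  Num.sqrt (\sum_(i < d) x ord0 i ^+ 2).

(* Lebesgue integral over R^d of an extended-real valued function, realised
   as the iterated one-dimensional Lebesgue integral (first coordinate
   outermost).  For nonnegative Borel functions this is the integral with
   respect to d-dimensional Lebesgue measure (Tonelli). *)
Fixpoint iint (R : realType) (d : nat) : ('rV[R]_d -> \bar R) -> \bar R :=
  match d return ('rV[R]_d -> \bar R) -> \bar R with
  | 0 => fun g => g 0
  | d'.+1 => fun g =>
      (\int[@lebesgue_measure R]_x
         iint (fun v : 'rV[R]_d' => g (row_mx (const_mx x : 'rV[R]_1) v)))%E
  end.

Definition Rd_integral (R : realType) (d : nat) (g : 'rV[R]_d -> R) : \bar R :=
  (iint (fun x => (Num.max (g x) 0)%:E) - iint (fun x => (Num.max (- g x) 0)%:E))%E.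

Definition L1 (R : realType) (d : nat) (g : 'rV[R]_d -> R) : Prop :=
  (iint (fun x => `|g x|%:E) < +oo)%E.

Definition nice_profile (R : realType) (d : nat) (g : 'rV[R]_d -> R) : Prop :=
  [/\ forall x, 0 <= g x,
      continuous g,
      (forall x y, enorm x = enorm y -> g x = g y) &
      (forall x y, enorm x <= enorm y -> g y <= g x)].

(* weak convergence as measures (narrow convergence: tested against bounded
   continuous functions) of the densities fe e dx to f dx as e -> 0+ *)
Definition weak_cvg_0 (R : realType) (d : nat) (fe : R -> 'rV[R]_d -> R)
    (f : 'rV[R]_d -> R) : Prop :=
  forall phi : 'rV[R]_d -> R, continuous phi ->
    (exists M : R, forall x, `|phi x| <= M) ->
    (fun e => Rd_integral (fun x => phi x * fe e x)) @ 0^'+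
      --> Rd_integral (fun x => phi x * f x).

(* Main.v *)
From HB Require Import structures.
From mathcomp Require Import all_boot all_order all_algebra.
From mathcomp Require Import all_classical all_reals all_analysis.
Require Import Defs.
From mathcomp Require Import measurable_realfun lra ring.
Set Implicit Arguments. Unset Strict Implicit. Unset Printing Implicit Defensive.
Import Order.TTheory GRing.Theory Num.Theory.
Import numFieldNormedType.Exports.
Local Open Scope classical_set_scope.
Local Open Scope ring_scope.
Section S.
Context (R : realType).

Lemma cont_prod (d : nat) (F : 'I_d -> 'rV[R]_d -> R) :
  (forall i, continuous (F i)) -> continuous (fun y => \prod_(i < d) F i y).
Proof.
move=> hF; suff : forall n (G : 'I_n -> 'rV[R]_d -> R), (forall i, continuous (G i)) ->
  continuous (fun y => \prod_(i < n) G i y) by apply.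
elim=> [|n IH] G hG.
  by under eq_fun do rewrite big_ord0; exact: cst_continuous.
under eq_fun do rewrite big_ord_recr /=.
move=> y; apply: continuousM; [exact: IH | exact: hG].
Qed.

Definition tent (hw t : R) := Num.max 0 (hw - `|t|).

Lemma tent_cont (d : nat) (hw : R) (c : R) (i : 'I_d) :
  continuous (fun y : 'rV[R]_d => tent hw (y ord0 i - c)).
Proof.
move=> y; rewrite /tent.
apply: (@continuous_max _ _ (fun _ => 0) (fun y : 'rV[R]_d => hw - `|y ord0 i - c|)).
  exact: cst_continuous.
apply: continuousB; first exact: cst_continuous.
apply: (continuous_comp (f := fun y : 'rV[R]_d => y ord0 i - c)) ; last exact: norm_continuous.
apply: continuousB; first exact: coord_continuous.
exact: cst_continuous.
Qed.

Lemma cont_ball (d : nat) (f : 'rV[R]_d -> R) (x : 'rV[R]_d) : continuous f ->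
  forall eta, 0 < eta -> exists2 rho, 0 < rho &
    forall y : 'rV[R]_d, (forall i, `|y ord0 i - x ord0 i| < rho) -> `|f y - f x| < eta.
Proof.
move=> cf eta eta0.
have /cvgrPdist_lt /(_ eta eta0) := cf x.
move=> /nbhs_ballP [rho rho0 H]; exists rho => // y hy.
rewrite distrC; apply: H.
rewrite /ball /=; split => // i j; rewrite (ord1 i).
by rewrite /ball /= distrC; apply: hy.
Qed.

Lemma box_abs (y s lo hw : R) : (s = 1 \/ s = -1) -> 0 <= lo -> 0 <= hw ->
  `|y - s * (lo + hw)| <= hw -> lo <= `|y| <= lo + 2 * hw.
Proof.
move=> [->|->] lo0 hw0; rewrite ?mul1r ?mulN1r ?opprK ler_norml => /andP [h1 h2].
  by rewrite ger0_norm; [apply/andP; split; lra | lra].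
by rewrite ler0_norm; [apply/andP; split; lra | lra].
Qed.

Lemma in_itvE (a b t : R) : (t \in (`[a, b]%classic : set R)) = (a <= t <= b).
Proof. by rewrite mem_setE in_itv. Qed.

Lemma tent_ge0 hw t : 0 <= tent hw t.
Proof. by rewrite /tent le_max lexx. Qed.

Lemma tent_upper hw c t : 0 <= hw ->
  tent hw (t - c) <= hw * \1_(`[c - hw, c + hw]%classic) t.
Proof.
move=> hw0; rewrite indicE in_itvE /tent.
case: (boolP (c - hw <= t <= c + hw)) => H /=.
  by rewrite mulr1 ge_max hw0 /=; rewrite lerBlDr lerDl.
rewrite mulr0 ge_max lexx /= subr_le0.
move: H; rewrite negb_and -!ltNge => /orP [] H.
  by rewrite ltr0_norm; lra.
by rewrite gtr0_norm; lra.
Qed.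

Lemma tent_lower hw c t : 0 <= hw ->
  hw / 2 * \1_(`[c - hw / 2, c + hw / 2]%classic) t <= tent hw (t - c).
Proof.
move=> hw0; rewrite indicE in_itvE /tent.
case: (boolP (c - hw / 2 <= t <= c + hw / 2)) => H /=; last by rewrite mulr0 le_max lexx.
rewrite mulr1 le_max; apply/orP; right.
move/andP: H => [H1 H2].
have : `|t - c| <= hw / 2 by rewrite ler_norml; apply/andP; split; lra.
lra.
Qed.

Definition phi (d : nat) (c : 'I_d -> R) (hw : R) (y : 'rV[R]_d) : R :=
  \prod_(i < d) tent hw (y ord0 i - c i).

Lemma phi_ge0 d c hw y : 0 <= @phi d c hw y.
Proof. by apply: prodr_ge0 => i _; apply: tent_ge0. Qed.

Lemma phi_le d c hw y : 0 <= hw -> @phi d c hw y <= hw ^+ d.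
Proof.
move=> hw0; have -> : hw ^+ d = \prod_(i < d) hw by rewrite prodr_const card_ord.
apply: ler_prod => i _; rewrite tent_ge0 /= /tent ge_max hw0 /=.
by rewrite lerBlDr lerDl.
Qed.

Lemma phi_supp d c hw y : @phi d c hw y != 0 -> forall i, `|y ord0 i - c i| < hw.
Proof.
move=> /prodf_neq0 H i; have := H i isT; rewrite /tent.
case: (leP 0 (hw - `|y ord0 i - c i|)) => h; last by case/negP.
move=> h2; have : hw - `|y ord0 i - c i| > 0 by rewrite lt_neqAle eq_sym h2.
lra.
Qed.

Lemma phi_upper d c hw y : 0 <= hw ->
  @phi d c hw y <= hw ^+ d * \prod_(i < d) \1_(`[c i - hw, c i + hw]%classic) (y ord0 i).
Proof.
move=> hw0; have -> : hw ^+ d = \prod_(i < d) hw by rewrite prodr_const card_ord.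
rewrite -big_split /=.
apply: ler_prod => i _; rewrite tent_ge0 /=; exact: tent_upper.
Qed.

Lemma phi_lower d c hw (y : 'rV[R]_d) : 0 <= hw ->
  (hw / 2) ^+ d * \prod_(i < d) \1_(`[c i - hw / 2, c i + hw / 2]%classic) (y ord0 i)
  <= @phi d c hw y.
Proof.
move=> hw0; have -> : (hw / 2) ^+ d = \prod_(i < d) (hw / 2) by rewrite prodr_const card_ord.
rewrite -big_split /=.
apply: ler_prod => i _; rewrite mulr_ge0 ?indic_ge0 ?divr_ge0 //=; exact: tent_lower.
Qed.

Lemma phi_cont d c hw : continuous (@phi d c hw).
Proof. by apply: cont_prod => i; apply: tent_cont. Qed.
End S.

Local Open Scope ereal_scope.

Import HBNNSimple.
Section gen.
Context d (T : measurableType d) (R : realType) (mu : {measure set T -> \bar R}).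

Lemma int_mono (f g : T -> \bar R) : (forall x, 0 <= f x) -> (forall x, f x <= g x) ->
  \int[mu]_x f x <= \int[mu]_x g x.
Proof.
move=> f0 fg; have g0 x : 0 <= g x by apply: le_trans (fg x).
rewrite !ge0_integralTE //=; apply: ge_ereal_sup => _ [h hf <-].
by apply: ereal_sup_ubound; exists h => // x; apply: le_trans (fg x).
Qed.

Lemma int_scale_le (f : T -> \bar R) (k : R) : (0 < k)%R -> (forall x, 0 <= f x) ->
  \int[mu]_x (k%:E * f x) <= k%:E * \int[mu]_x f x.
Proof.
move=> k0 f0; have kf0 x : 0 <= k%:E * f x by rewrite mule_ge0 // lee_fin ltW.
rewrite !ge0_integralTE //=; apply: ge_ereal_sup => _ [h hf <-].
have ik0 : (0 <= k^-1)%R by rewrite invr_ge0 ltW.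
pose h' := scale_nnsfun h ik0.
have -> : sintegral mu h = k%:E * sintegral mu h'.
  rewrite /h' /= sintegralrM muleA -EFinM divff ?gt_eqF // mul1e.
  by apply: eq_sintegral => x.
rewrite lee_pmul2l ?lte_fin //; apply: ereal_sup_ubound; exists h' => // x.
rewrite /h' /= -(@lee_pmul2l _ k%:E) ?lte_fin // -EFinM mulrA divff ?gt_eqF // mul1r.
exact: hf.
Qed.

Lemma int_scale (f : T -> \bar R) (k : R) : (0 <= k)%R -> (forall x, 0 <= f x) ->
  \int[mu]_x (k%:E * f x) = k%:E * \int[mu]_x f x.
Proof.
move=> k0 f0; have [->|kp] := eqVneq k 0%R.
  by rewrite mul0e; under eq_integral do rewrite mul0e; rewrite integral0.
have {k0 kp} k0 : (0 < k)%R by rewrite lt_neqAle eq_sym kp.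
apply/eqP; rewrite eq_le int_scale_le //=.
have kf0 x : 0 <= k%:E * f x by rewrite mule_ge0 // lee_fin ltW.
have := @int_scale_le (fun x => k%:E * f x) k^-1 _ kf0; rewrite invr_gt0 => /(_ k0).
under eq_integral do rewrite muleA -EFinM mulVf ?gt_eqF // mul1e.
by move=> h; rewrite -(@lee_pmul2l _ k^-1%:E) ?lte_fin ?invr_gt0 // muleA -EFinM mulVf ?gt_eqF // mul1e.
Qed.
End gen.

Section iint.
Context (R : realType).

Lemma iint_ext (d : nat) (g h : 'rV[R]_d -> \bar R) : g =1 h -> iint g = iint h.
Proof. by move=> /funext ->. Qed.

Lemma iint_ge0 (d : nat) (g : 'rV[R]_d -> \bar R) : (forall x, 0 <= g x) -> 0 <= iint g.
Proof.
elim: d g => [|d IH] g g0 /=; first exact: g0.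
by apply: integral_ge0 => x _; apply: IH => v.
Qed.

Lemma iint_mono (d : nat) (g h : 'rV[R]_d -> \bar R) : (forall x, 0 <= g x) ->
  (forall x, g x <= h x) -> iint g <= iint h.
Proof.
elim: d g h => [|d IH] g h g0 gh /=; first exact: gh.
apply: int_mono => x; first by apply: iint_ge0 => v.
by apply: IH => v.
Qed.

Lemma iint_scale (d : nat) (g : 'rV[R]_d -> \bar R) (k : R) : (0 <= k)%R ->
  (forall x, 0 <= g x) -> iint (fun x => k%:E * g x) = k%:E * iint g.
Proof.
elim: d g => [|d IH] g k0 g0 //=.
under eq_integral do rewrite IH //.
by rewrite int_scale // => x; apply: iint_ge0.
Qed.

Lemma iint0 (d : nat) : iint (fun _ : 'rV[R]_d => 0) = 0.
Proof.
elim: d => [|d IH] //=.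
by under eq_integral do rewrite IH; rewrite integral0.
Qed.

Lemma rowE1 (d : nat) (x : R) (v : 'rV[R]_d) :
  (row_mx (const_mx x : 'rV[R]_1) v) ord0 (@ord0 d) = x.
Proof.
have -> : (@ord0 d : 'I_(1 + d)) = lshift d (@ord0 0) by apply: val_inj.
by rewrite row_mxEl mxE.
Qed.

Lemma rowE2 (d : nat) (x : R) (v : 'rV[R]_d) (i : 'I_d) :
  (row_mx (const_mx x : 'rV[R]_1) v) ord0 (lift ord0 i) = v ord0 i.
Proof.
have -> : (lift ord0 i : 'I_(1 + d)) = rshift 1 i by apply: val_inj.
by rewrite row_mxEr.
Qed.

Lemma iint_box (d : nat) (a b : 'I_d -> R) : (forall i, a i <= b i)%R ->
  iint (fun y : 'rV[R]_d => (\prod_(i < d) \1_(`[a i, b i]%classic) (y ord0 i))%:E)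
  = (\prod_(i < d) (b i - a i))%:E.
Proof.
elim: d a b => [|d IH] a b ab /=; first by rewrite !big_ord0.
under eq_integral do under iint_ext do rewrite big_ord_recl rowE1 EFinM.
under eq_integral => x _.
  rewrite iint_scale //; last by move=> v; rewrite lee_fin prodr_ge0.
  under iint_ext do under eq_bigr do rewrite rowE2.
  rewrite (IH (fun i => a (lift ord0 i)) (fun i => b (lift ord0 i))) //.
  over.
rewrite /= ge0_integralZr; last first.
- by rewrite lee_fin prodr_ge0 // => i _; rewrite subr_ge0.
- by move=> x _; rewrite lee_fin.
- by apply/measurable_EFinP; apply: measurable_indic.
1: exact: measurableT.
rewrite integral_indic ?setIT //.
have L : lebesgue_measure (`[a ord0, b ord0]%classic : set R) = (b ord0 - a ord0)%:E.
  rewrite lebesgue_measure_itv /= lte_fin.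
  by case: ltgtP (ab ord0) => // -> _; rewrite subrr.
rewrite [X in (X * _)%E = _](_ : _ = (b ord0 - a ord0)%:E); last exact: L.
by rewrite big_ord_recl -EFinM.
Qed.
End iint.

Section key.
Context (R : realType).

Lemma prod_cst (d : nat) (F : 'I_d -> R) (k : R) : (forall i, F i = k) ->
  (\prod_(i < d) F i = k ^+ d)%R.
Proof. by move=> H; rewrite (eq_bigr (fun _ => k)) ?prodr_const ?card_ord // => i _. Qed.

Lemma iint_phi_bounds d c hw : (0 < hw)%R ->
  ((hw / 2) ^+ d * hw ^+ d)%:E <= iint (fun y => (@phi R d c hw y)%:E)
  <= (hw ^+ d * (2 * hw) ^+ d)%:E.
Proof.
move=> hw0; have hw0' : (0 <= hw)%R by exact: ltW.
have ind0 (a b : 'I_d -> R) (y : 'rV[R]_d) :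
    0 <= (\prod_(i < d) (\1_(`[a i, b i]%classic) (y ord0 i) : R))%:E.
  by rewrite lee_fin prodr_ge0 // => i _; exact: indic_ge0.
apply/andP; split.
  have B := @iint_box R d (fun i => c i - hw / 2)%R (fun i => c i + hw / 2)%R.
  rewrite (prod_cst (k := hw)) in B; last by move=> i; lra.
  have k0 : (0 <= (hw / 2) ^+ d)%R by rewrite exprn_ge0 //; lra.
  have E := iint_scale k0 (ind0 (fun i => c i - hw / 2)%R (fun i => c i + hw / 2)%R).
  have -> : ((hw / 2) ^+ d * hw ^+ d)%:E = iint (fun y : 'rV[R]_d => ((hw / 2) ^+ d)%:E *
     (\prod_(i < d) \1_(`[c i - hw / 2, c i + hw / 2]%classic) (y ord0 i))%:E).
    by rewrite E B ?EFinM // => i; lra.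
  apply: iint_mono => y; first by rewrite mule_ge0 // lee_fin.
  by rewrite -EFinM lee_fin phi_lower.
have B := @iint_box R d (fun i => c i - hw)%R (fun i => c i + hw)%R.
rewrite (prod_cst (k := 2 * hw)) in B; last by move=> i; lra.
have k0 : (0 <= hw ^+ d)%R by rewrite exprn_ge0.
have E := iint_scale k0 (ind0 (fun i => c i - hw)%R (fun i => c i + hw)%R).
have -> : (hw ^+ d * (2 * hw) ^+ d)%:E = iint (fun y : 'rV[R]_d => (hw ^+ d)%:E *
     (\prod_(i < d) \1_(`[c i - hw, c i + hw]%classic) (y ord0 i))%:E).
  by rewrite E B ?EFinM // => i; lra.
apply: iint_mono => y; first by rewrite lee_fin phi_ge0.
by rewrite -EFinM lee_fin phi_upper.
Qed.

Lemma Rd_nonneg d (G : 'rV[R]_d -> R) : (forall y, (0 <= G y)%R) ->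
  Rd_integral G = iint (fun y => (G y)%:E).
Proof.
move=> G0; rewrite /Rd_integral.
rewrite (@iint_ext R d (fun y => (Num.max (- G y) 0)%:E) (fun _ => 0)); last first.
  by move=> y; rewrite max_r // oppr_le0.
rewrite iint0 sube0; apply: iint_ext => y; by rewrite max_l.
Qed.

Lemma phi_scale_le d c hw (g : 'rV[R]_d -> R) (k : R) : (0 <= k)%R ->
  (forall y, (0 <= g y)%R) -> (forall y, @phi R d c hw y != 0%R -> (g y <= k)%R) ->
  iint (fun y => (phi c hw y * g y)%:E) <= k%:E * iint (fun y => (phi c hw y)%:E).
Proof.
move=> k0 g0 gk; rewrite -iint_scale //; last by move=> y; rewrite lee_fin phi_ge0.
apply: iint_mono => y; first by rewrite lee_fin mulr_ge0 ?phi_ge0.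
rewrite -EFinM lee_fin; have [->|nz] := eqVneq (phi c hw y) 0%R; first by rewrite !mulr0 !mul0r.
have := gk y nz; have := phi_ge0 c hw y; nra.
Qed.

Lemma phi_scale_ge d c hw (g : 'rV[R]_d -> R) (k : R) : (0 <= k)%R ->
  (forall y, @phi R d c hw y != 0%R -> (k <= g y)%R) ->
  k%:E * iint (fun y => (phi c hw y)%:E) <= iint (fun y => (phi c hw y * g y)%:E).
Proof.
move=> k0 gk; rewrite -iint_scale //; last by move=> y; rewrite lee_fin phi_ge0.
apply: iint_mono => y; first by rewrite -EFinM lee_fin mulr_ge0 ?phi_ge0.
rewrite -EFinM lee_fin; have [->|nz] := eqVneq (phi c hw y) 0%R; first by rewrite !mulr0 !mul0r.
have := gk y nz; have := phi_ge0 c hw y; nra.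
Qed.

Lemma enorm_mono d (x y : 'rV[R]_d) : (forall i, x ord0 i ^+ 2 <= y ord0 i ^+ 2)%R ->
  (enorm x <= enorm y)%R.
Proof.
move=> H; rewrite /enorm ler_sqrt; last by rewrite sumr_ge0 // => i _; rewrite sqr_ge0.
by apply: ler_sum => i _; apply: H.
Qed.

Lemma enorm0_le d (y : 'rV[R]_d) : (enorm (0 : 'rV[R]_d) <= enorm y)%R.
Proof. by apply: enorm_mono => i; rewrite mxE expr0n /= sqr_ge0. Qed.

Lemma near01 : \forall e \near (0 : R)^'+, (0 < e <= 1)%R.
Proof.
near=> e; apply/andP; split; near: e; [exact: nbhs_right_gt | exact: nbhs_right_le].
Unshelve. all: by end_near. Qed.

Lemma lower_key d (fe : R -> 'rV[R]_d -> R) f x c hw m :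
  (forall e, (0 < e <= 1)%R -> nice_profile (fe e)) -> nice_profile f -> weak_cvg_0 fe f ->
  (0 < hw)%R -> (0 <= m)%R ->
  (forall y, @phi R d c hw y != 0%R -> (m <= f y)%R) ->
  (forall e, (0 < e <= 1)%R -> forall y, phi c hw y != 0%R -> (fe e y <= fe e x)%R) ->
  forall eta, (0 < eta)%R -> \forall e \near (0 : R)^'+, (m - eta < fe e x)%R.
Proof.
move=> Hfe Hf Hw hw0 m0 Hm Hx eta eta0.
have [f0 fcont frad fmono] := Hf.
have /andP [Ilo Ihi] := iint_phi_bounds c hw0.
set I := iint _ in Ilo Ihi.
have Ipos : (0 < (hw / 2) ^+ d * hw ^+ d)%R by rewrite mulr_gt0 // exprn_gt0 //; lra.
have Ifin : I \is a fin_num.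
  rewrite fin_numElt; apply/andP; split.
    by apply: lt_le_trans Ilo; rewrite ltNye.
  exact: (le_lt_trans Ihi (ltey _)).
set Ir := fine I; have IE : I = Ir%:E by rewrite /Ir fineK.
have Ir0 : (0 < Ir)%R by rewrite -lte_fin -IE; apply: lt_le_trans Ilo; rewrite lte_fin.
have phib : forall y, (`|phi c hw y| <= hw ^+ d)%R.
  by move=> y; rewrite ger0_norm ?phi_ge0 // phi_le // ltW.
have Hc := Hw (phi c hw) (@phi_cont R d c hw) (ex_intro _ _ phib).
rewrite (@Rd_nonneg d (fun y => phi c hw y * f y)%R) in Hc; last first.
  by move=> y; rewrite mulr_ge0 ?phi_ge0.
set J := iint _ in Hc.
have Jle : J <= (f 0 * Ir)%:E.
  rewrite EFinM -IE; apply: phi_scale_le => [|y|y _]; [exact: f0|exact: f0|].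
  by apply: fmono; apply: enorm0_le.
have Jfin : J \is a fin_num.
  rewrite fin_numElt; apply/andP; split.
    by apply: lt_le_trans (iint_ge0 _); [rewrite ltNye | move=> y; rewrite lee_fin mulr_ge0 ?phi_ge0].
  exact: (le_lt_trans Jle (ltey _)).
set Jr := fine J; have JE : J = Jr%:E by rewrite /Jr fineK.
rewrite JE in Hc; move/fine_cvgP: Hc => [Hfin Hcv].
have Jge : (m * Ir)%:E <= Jr%:E by rewrite -JE EFinM -IE; apply: phi_scale_ge.
rewrite lee_fin in Jge.
have H1 : \forall e \near (0 : R)^'+,
    (Jr - eta * Ir < fine (Rd_integral (fun y => phi c hw y * fe e y)))%R.
  by apply: (cvgr_gt _ Hcv); rewrite ltrBlDr ltrDl mulr_gt0.
near=> e.
have he : (0 < e <= 1)%R by near: e; exact: near01.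
have hf : Rd_integral (fun y => phi c hw y * fe e y)%R \is a fin_num.
  by near: e; exact: Hfin.
have hg : (Jr - eta * Ir < fine (Rd_integral (fun y => phi c hw y * fe e y)))%R.
  by near: e; exact: H1.
have [fe0 _ _ _] := Hfe e he.
move: hf hg; rewrite /= (@Rd_nonneg d (fun y => phi c hw y * fe e y)%R); last first.
  by move=> y; rewrite mulr_ge0 ?phi_ge0.
move=> hf hg.
have : iint (fun y => (phi c hw y * fe e y)%:E) <= (fe e x * Ir)%:E.
  by rewrite EFinM -IE; apply: phi_scale_le => //; apply: Hx.
rewrite -(fineK hf) lee_fin => hle.
nra.
Unshelve. all: by end_near. Qed.

Lemma upper_key d (fe : R -> 'rV[R]_d -> R) f x c hw m :
  (forall e, (0 < e <= 1)%R -> nice_profile (fe e)) -> nice_profile f -> weak_cvg_0 fe f ->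
  (0 < hw)%R -> (0 <= m)%R ->
  (forall y, @phi R d c hw y != 0%R -> (f y <= m)%R) ->
  (forall e, (0 < e <= 1)%R -> forall y, phi c hw y != 0%R -> (fe e x <= fe e y)%R) ->
  forall eta, (0 < eta)%R -> \forall e \near (0 : R)^'+, (fe e x < m + eta)%R.
Proof.
move=> Hfe Hf Hw hw0 m0 Hm Hx eta eta0.
have [f0 fcont frad fmono] := Hf.
have /andP [Ilo Ihi] := iint_phi_bounds c hw0.
set I := iint _ in Ilo Ihi.
have Ipos : (0 < (hw / 2) ^+ d * hw ^+ d)%R by rewrite mulr_gt0 // exprn_gt0 //; lra.
have Ifin : I \is a fin_num.
  rewrite fin_numElt; apply/andP; split.
    by apply: lt_le_trans Ilo; rewrite ltNye.
  exact: (le_lt_trans Ihi (ltey _)).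
set Ir := fine I; have IE : I = Ir%:E by rewrite /Ir fineK.
have Ir0 : (0 < Ir)%R by rewrite -lte_fin -IE; apply: lt_le_trans Ilo; rewrite lte_fin.
have phib : forall y, (`|phi c hw y| <= hw ^+ d)%R.
  by move=> y; rewrite ger0_norm ?phi_ge0 // phi_le // ltW.
have Hc := Hw (phi c hw) (@phi_cont R d c hw) (ex_intro _ _ phib).
rewrite (@Rd_nonneg d (fun y => phi c hw y * f y)%R) in Hc; last first.
  by move=> y; rewrite mulr_ge0 ?phi_ge0.
set J := iint _ in Hc.
have Jle : J <= (f 0 * Ir)%:E.
  rewrite EFinM -IE; apply: phi_scale_le => [|y|y _]; [exact: f0|exact: f0|].
  by apply: fmono; apply: enorm0_le.
have Jfin : J \is a fin_num.
  rewrite fin_numElt; apply/andP; split.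
    by apply: lt_le_trans (iint_ge0 _); [rewrite ltNye | move=> y; rewrite lee_fin mulr_ge0 ?phi_ge0].
  exact: (le_lt_trans Jle (ltey _)).
set Jr := fine J; have JE : J = Jr%:E by rewrite /Jr fineK.
rewrite JE in Hc; move/fine_cvgP: Hc => [Hfin Hcv].
have Jge : Jr%:E <= (m * Ir)%:E by rewrite -JE EFinM -IE; apply: phi_scale_le.
rewrite lee_fin in Jge.
have H1 : \forall e \near (0 : R)^'+,
    (fine (Rd_integral (fun y => phi c hw y * fe e y)) < Jr + eta * Ir)%R.
  by apply: (cvgr_lt _ Hcv); rewrite ltrDl mulr_gt0.
near=> e.
have he : (0 < e <= 1)%R by near: e; exact: near01.
have hf : Rd_integral (fun y => phi c hw y * fe e y)%R \is a fin_num.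
  by near: e; exact: Hfin.
have hg : (fine (Rd_integral (fun y => phi c hw y * fe e y)) < Jr + eta * Ir)%R.
  by near: e; exact: H1.
have [fe0 _ _ _] := Hfe e he.
move: hf hg; rewrite /= (@Rd_nonneg d (fun y => phi c hw y * fe e y)%R); last first.
  by move=> y; rewrite mulr_ge0 ?phi_ge0.
move=> hf hg.
have : (fe e x * Ir)%:E <= iint (fun y => (phi c hw y * fe e y)%:E).
  by rewrite EFinM -IE; apply: phi_scale_ge => //; apply: Hx.
rewrite -(fineK hf) lee_fin => hle.
nra.
Unshelve. all: by end_near. Qed.
End key.
Local Close Scope ereal_scope.
Section arith.
Context (R : realType).
Definition sgn (t : R) : R := if 0 <= t then 1 else -1.

Lemma helperA (xi yi hw : R) : 0 <= hw ->
  `|yi - sgn xi * (`|xi| + hw)| < hw -> xi ^+ 2 <= yi ^+ 2 /\ `|yi - xi| <= 2 * hw.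
Proof.
move=> hw0; rewrite /sgn; case: (leP 0 xi) => hx.
  rewrite mul1r (ger0_norm hx) ltr_norml => /andP [h1 h2].
  by split; [nra | rewrite ler_norml; apply/andP; split; lra].
rewrite (ltr0_norm hx) mulN1r opprK ltr_norml => /andP [h1 h2].
by split; [nra | rewrite ler_norml; apply/andP; split; lra].
Qed.

Lemma helperB (xi yi th w : R) : 0 < th < 1 -> 0 < w ->
  `|yi - sgn xi * ((1 - th) * `|xi| + th * w / 2)| < th * w / 2 ->
  yi ^+ 2 <= (1 - th) * xi ^+ 2 + th * w ^+ 2 /\ `|yi - xi| <= th * (w + `|xi|).
Proof.
move=> /andP [th0 th1] w0; rewrite /sgn; case: (leP 0 xi) => hx.
  rewrite mul1r (ger0_norm hx) ltr_norml => /andP [h1 h2].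
  have hy : 0 <= yi by nra.
  have hyu : yi <= (1 - th) * xi + th * w by lra.
  have t1 : 0 <= 1 - th by lra.
  split.
    have B2 : yi ^+ 2 <= ((1 - th) * xi + th * w) ^+ 2 by rewrite !expr2; nra.
    have P : 0 <= th * (1 - th) * (xi - w) ^+ 2 by rewrite mulr_ge0 ?sqr_ge0 // mulr_ge0 // ltW.
    apply: (le_trans B2); rewrite -subr_ge0; apply: le_trans P _; rewrite le_eqVlt; apply/orP; left; apply/eqP; ring.
  by rewrite ler_norml; apply/andP; split; nra.
rewrite (ltr0_norm hx) mulN1r opprK ltr_norml => /andP [h1 h2].
have hy : yi <= 0 by nra.
have hyu : - ((1 - th) * - xi + th * w) <= yi by lra.
have t1 : 0 <= 1 - th by lra.
split.
  have B2 : yi ^+ 2 <= ((1 - th) * - xi + th * w) ^+ 2 by rewrite !expr2; nra.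
  have P : 0 <= th * (1 - th) * (- xi - w) ^+ 2 by rewrite mulr_ge0 ?sqr_ge0 // mulr_ge0 // ltW.
  apply: (le_trans B2); rewrite -subr_ge0; apply: le_trans P _; rewrite le_eqVlt; apply/orP; left; apply/eqP; ring.
by rewrite ler_norml; apply/andP; split; nra.
Qed.

Lemma sum_upper d (x y : 'rV[R]_d) th w : 0 < th < 1 ->
  d%:R * w ^+ 2 <= \sum_(i < d) x ord0 i ^+ 2 ->
  (forall i, y ord0 i ^+ 2 <= (1 - th) * x ord0 i ^+ 2 + th * w ^+ 2) ->
  \sum_(i < d) y ord0 i ^+ 2 <= \sum_(i < d) x ord0 i ^+ 2.
Proof.
move=> /andP [th0 th1] hd H.
apply: le_trans (ler_sum _ (fun i _ => H i)) _.
rewrite big_split /= -mulr_sumr sumr_const card_ord -mulr_natl.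
set S := \sum_(i < d) _ in hd *.
have : th * (d%:R * w ^+ 2) <= th * S by rewrite ler_pM2l.
nra.
Qed.

Lemma le_sum_one d (F : 'I_d -> R) j : (forall i, 0 <= F i) -> F j <= \sum_(i < d) F i.
Proof. by move=> F0; rewrite (bigD1 j) //= lerDl sumr_ge0. Qed.

Lemma dw2 d (x : 'rV[R]_d) (j : 'I_d) :
  d%:R * (`|x ord0 j| / d%:R) ^+ 2 <= \sum_(i < d) x ord0 i ^+ 2.
Proof.
have d0 : (0 < d)%N by apply: leq_ltn_trans (leq0n j) (ltn_ord j).
have dR : (1 <= d%:R :> R) by rewrite ler1n.
have Hs := @le_sum_one d (fun i => x ord0 i ^+ 2) j (fun i => sqr_ge0 _).
apply: (le_trans _ Hs).
rewrite expr_div_n real_normK ?num_real //.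
have dn0 : (d%:R : R) != 0 by rewrite pnatr_eq0 -lt0n.
have -> : d%:R * (x ord0 j ^+ 2 / d%:R ^+ 2) = x ord0 j ^+ 2 / d%:R.
  by field.
have : 0 <= x ord0 j ^+ 2 by rewrite sqr_ge0.
rewrite ler_pdivrMr; last by lra.
nra.
Qed.
End arith.

Unset Implicit Arguments.
Theorem lemma2p6 (R : realType) (d : nat) (fe : R -> 'rV[R]_d -> R)
    (f : 'rV[R]_d -> R) :
  (forall e, 0 < e <= 1 -> L1 (fe e) /\ nice_profile (fe e)) ->
  L1 f -> nice_profile f ->
  weak_cvg_0 fe f ->
  forall x : 'rV[R]_d, x != 0 -> (fun e => fe e x) @ 0^'+ --> f x.
Proof.
move=> Hfe L1f Hf Hw x x0.
have Hfe' : forall e, 0 < e <= 1 -> nice_profile (fe e) by move=> e he; case: (Hfe e he).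
have [f0 fcont _ fmono] := Hf.
have : [exists j, x ord0 j != 0].
  apply: contraNT x0 => /existsPn H; apply/eqP/rowP => j; rewrite mxE.
  by move: (H j); rewrite negbK => /eqP.
case/existsP => j xj.
have d0 : (0 < d)%N by apply: leq_ltn_trans (leq0n j) (ltn_ord j).
apply/cvgrPdist_lt => eta eta0.
have eta2 : 0 < eta / 2 by lra.
have [rho rho0 Hrho] := cont_ball x fcont eta2.
have HL : \forall e \near (0 : R)^'+, f x - eta < fe e x.
  pose hw := rho / 4.
  have hw0 : 0 < hw by rewrite /hw; lra.
  pose c := fun i => sgn (x ord0 i) * (`|x ord0 i| + hw).
  have supp y : phi c hw y != 0 -> (forall i, x ord0 i ^+ 2 <= y ord0 i ^+ 2) /\
      (forall i, `|y ord0 i - x ord0 i| < rho).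
    move=> /phi_supp H; split => i; have [h1 h2] := helperA (ltW hw0) (H i) => //.
    by apply: le_lt_trans h2 _; rewrite /hw; lra.
  have m0 : 0 <= Num.max 0 (f x - eta / 2) by rewrite le_max lexx.
  have H := @lower_key R d fe f x c hw _ Hfe' Hf Hw hw0 m0 _ _ (eta / 2) eta2.
  apply: filterS (H _ _).
  - move=> e; have : f x - eta / 2 <= Num.max 0 (f x - eta / 2) by rewrite le_max lexx orbT.
    lra.
  - move=> y /supp [_ /Hrho]; rewrite ltr_norml => /andP [h1 h2].
    by rewrite ge_max f0 /=; lra.
  - move=> e he y /supp [h _]; have [_ _ _ mono] := Hfe' e he.
    by apply: mono; apply: enorm_mono.
have HU : \forall e \near (0 : R)^'+, fe e x < f x + eta.
  pose w := `|x ord0 j| / d%:R.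
  have w0 : 0 < w by rewrite /w divr_gt0 ?normr_gt0 // ltr0n.
  pose K := w + \sum_(i < d) `|x ord0 i| + 1.
  have K0 : 0 < K by rewrite /K; have := @sumr_ge0 _ _ (index_enum 'I_d) xpredT (fun i => `|x ord0 i|) (fun i _ => normr_ge0 _); lra.
  have Kb i : w + `|x ord0 i| <= K.
    rewrite /K; have := @le_sum_one R d (fun i => `|x ord0 i|) i (fun i => normr_ge0 _); lra.
  pose th := Num.min (1 / 2) (rho / (2 * K)).
  have th0 : 0 < th by rewrite /th lt_min; apply/andP; split; [lra | rewrite divr_gt0 //; lra].
  have th1 : th < 1 by rewrite /th gt_min; apply/orP; left; lra.
  have thK : th * K <= rho / 2.
    have : th <= rho / (2 * K) by rewrite /th ge_min lexx orbT.
    rewrite ler_pdivlMr; last by lra.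
    lra.
  pose hw := th * w / 2.
  have hw0 : 0 < hw by rewrite /hw; have := mulr_gt0 th0 w0; lra.
  pose c := fun i => sgn (x ord0 i) * ((1 - th) * `|x ord0 i| + th * w / 2).
  have supp y : phi c hw y != 0 ->
      (\sum_(i < d) y ord0 i ^+ 2 <= \sum_(i < d) x ord0 i ^+ 2) /\
      (forall i, `|y ord0 i - x ord0 i| < rho).
    move=> /phi_supp H; have thI : 0 < th < 1 by rewrite th0 th1.
    split.
      apply: (sum_upper (th := th) (w := w)) => //; first exact: dw2.
      by move=> i; have [] := helperB thI w0 (H i).
    move=> i; have [_ h2] := helperB thI w0 (H i).
    apply: le_lt_trans h2 _; have := Kb i; have := ler_wpM2l (ltW th0) (Kb i).
    lra.
  have m0 : 0 <= f x + eta / 2 by have := f0 x; lra.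
  have H := @upper_key R d fe f x c hw _ Hfe' Hf Hw hw0 m0 _ _ (eta / 2) eta2.
  apply: filterS (H _ _).
  - by move=> e; lra.
  - move=> y /supp [_ /Hrho]; rewrite ltr_norml => /andP [h1 h2].
    lra.
  - move=> e he y /supp [h _]; have [_ _ _ mono] := Hfe' e he.
    by apply: mono; rewrite /enorm ler_sqrt // sumr_ge0 // => i _; rewrite sqr_ge0.
near=> e.
have h1 : f x - eta < fe e x by near: e; exact: HL.
have h2 : fe e x < f x + eta by near: e; exact: HU.
rewrite ltr_norml; apply/andP; split; lra.
Unshelve. all: by end_near. Qed.
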